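(* Let $M\in\{-1,+1\}^{m\times N}$ and let $M'$ be obtained from $M$ by duplicating rows (each row of $M$ replaced by one or more identical copies), and partition the rows of $M'$ into duplicate classes, one class for each row of $M$. Suppose the initial distribution $D'_1$ for AdaBoost on $M'$ is constant on each duplicate class. Then: (1) the exhaustive AdaBoost orbit $(D'_t)$ on $M'$ remains constant on each duplicate class for all $t$; (2) the class-summed distributions $\bar D_t$ (summing $D'_t$ over each class) evolve exactly as exhaustive AdaBoost on $M$ started from $\bar D_1$; (3) $\gamma(M')=\gamma(M)$.
   Context: Exhaustive AdaBoost on $M\in\{-1,+1\}^{m\times N}$ with smallest-index tie-breaking: from $D_t\in\Delta^{m-1}$, set $\mu_t(j)=(D_t^\top M)_j$, $j_t=\min\operatorname{argmax}_j\mu_t(j)$, $r_t=\mu_t(j_t)$, and $D_{t+1}(i)=D_t(i)/(1+r_tM_{ij_t})$. The weak-learning margin is $\gamma(M)=\min_{D\in\Delta^{m-1}}\max_{1\le j\le N}(D^\top M)_j$. *)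

(* Defs.v *)
From HB Require Import structures.
From mathcomp Require Import all_boot all_order all_algebra.
From mathcomp Require Import all_classical all_reals.
Set Implicit Arguments. Unset Strict Implicit. Unset Printing Implicit Defensive.
Import Order.TTheory GRing.Theory Num.Theory.
Local Open Scope ring_scope.

Section AdaBoost.
Variables (R : realType) (m N : nat).
Implicit Types (M : 'M[R]_(m, N.+1)) (D : 'I_m -> R).

Definition pm1 M := forall i j, M i j = 1 \/ M i j = -1.

Definition in_simplex D := (forall i, 0 <= D i) /\ \sum_i D i = 1.

Definition edge M D (j : 'I_N.+1) : R := \sum_i D i * M i j.

Definition edge_max M D : R := \big[Num.max/edge M D ord0]_j edge M D j.

Definition jstar M D : 'I_N.+1 :=
  [arg min_(j < ord0 | edge M D j == edge_max M D) (j : nat)]%O.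

Definition ada_step M D : 'I_m -> R :=
  let j := jstar M D in
  let r := edge M D j in
  fun i => D i / (1 + r * M i j).

(* ada_orbit M D1 t = D_{t+1}  (so ada_orbit M D1 0 = D_1) *)
Definition ada_orbit M D (t : nat) : 'I_m -> R := iter t (ada_step M) D.

(* weak-learning margin gamma(M) = min_{D in simplex} max_j (D^T M)_j
   (the minimum is attained, so it equals the infimum) *)
Definition gamma M : R :=
  inf [set r : R | exists D, in_simplex D /\ r = edge_max M D].

End AdaBoost.

Definition class_sum (R : realType) (m m' : nat) (c : 'I_m' -> 'I_m)
  (D' : 'I_m' -> R) : 'I_m -> R :=
  fun i => \sum_(i' | c i' == i) D' i'.

(* Main.v *)
Require Import Defs.
From HB Require Import structures.
From mathcomp Require Import all_boot all_order all_algebra.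
From mathcomp Require Import all_classical all_reals.
Import Order.TTheory GRing.Theory Num.Theory.
Local Open Scope ring_scope.

Section Helpers.
Variables (R : realType) (m m' N : nat)
    (M : 'M[R]_(m, N.+1)) (M' : 'M[R]_(m', N.+1))
    (c : 'I_m' -> 'I_m).
Hypothesis HM : forall i' j, M' i' j = M (c i') j.

Lemma sum_cs (F : 'I_m' -> R) : \sum_i class_sum c F i = \sum_i' F i'.
Proof.
rewrite [RHS](partition_big c xpredT) //=.
Qed.

Lemma edgeE (D' : 'I_m' -> R) : edge M' D' = edge M (class_sum c D').
Proof.
apply: funext => j; rewrite /edge /class_sum.
rewrite (partition_big c xpredT) //=; apply: eq_bigr => i _.
rewrite big_distrl /=; apply: eq_bigr => i' /eqP <-; by rewrite HM.
Qed.

Lemma edge_maxE D' : edge_max M' D' = edge_max M (class_sum c D').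
Proof. by rewrite /edge_max edgeE. Qed.

Lemma jstarE D' : jstar M' D' = jstar M (class_sum c D').
Proof. by rewrite /jstar /edge_max edgeE. Qed.

Lemma stepE D' i' : ada_step M' D' i' =
  D' i' / (1 + edge M (class_sum c D') (jstar M (class_sum c D'))
               * M (c i') (jstar M (class_sum c D'))).
Proof. by rewrite /ada_step /= jstarE edgeE HM. Qed.

Lemma step_cs D' : class_sum c (ada_step M' D') = ada_step M (class_sum c D').
Proof.
apply: funext => i; rewrite {1}/class_sum.
under eq_bigr => i' _ do rewrite stepE.
rewrite /ada_step /= /class_sum big_distrl /=.
by apply: eq_bigr => i' /eqP ->.
Qed.

End Helpers.

Theorem lemma7 (R : realType) (m m' N : nat)
    (M : 'M[R]_(m, N.+1)) (M' : 'M[R]_(m', N.+1))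
    (c : 'I_m' -> 'I_m) (D1' : 'I_m' -> R) :
  pm1 M ->
  (forall i, exists i', c i' = i) ->
  (forall i' j, M' i' j = M (c i') j) ->
  in_simplex D1' ->
  (forall i1 i2, c i1 = c i2 -> D1' i1 = D1' i2) ->
  [/\ (forall t i1 i2, c i1 = c i2 ->
          ada_orbit M' D1' t i1 = ada_orbit M' D1' t i2),
      (forall t, class_sum c (ada_orbit M' D1' t) =
                 ada_orbit M (class_sum c D1') t)
    & gamma M' = gamma M].
Proof.
move=> _ Hsurj HM _ HD1; split.
- elim=> [|t IH] i1 i2 Hc; first exact: HD1.
  move: IH; rewrite /ada_orbit => IH.
  by rewrite !iterS !(@stepE _ _ _ _ _ _ _ HM) (IH i1 i2 Hc) Hc.
- elim=> [|t IH] //.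
  move: IH; rewrite /ada_orbit => IH.
  by rewrite !iterS (@step_cs _ _ _ _ _ _ _ HM) IH.
- rewrite /gamma; congr inf; apply/seteqP; split => r /= [D [[D0 D1] ->]].
  + exists (class_sum c D); split; last by rewrite (@edge_maxE _ _ _ _ _ _ _ HM).
    split; last by rewrite (@sum_cs _ _ _ c).
    by move=> i; apply: sumr_ge0 => i' _; exact: D0.
  + pose D' := fun i' : 'I_m' =>
      if [pick k | c k == c i'] is Some k then (if k == i' then D (c i') else 0)
      else 0.
    have csD : class_sum c D' = D.
      apply: funext => i; rewrite /class_sum.
      rewrite (eq_bigr (fun i' => if [pick k | c k == i] is Some k
                 then (if k == i' then D i else 0) else 0)); last first.
        by move=> i' /eqP <-.
      case: (pickP (fun k => c k == i)) => [k /eqP Hk|Hn]; last first.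
        by have [i' Hi'] := Hsurj i; move: (Hn i'); rewrite Hi' eqxx.
      rewrite (bigD1 k) /=; last by rewrite Hk.
      rewrite eqxx big1 ?addr0 // => i' /andP [_ /negbTE].
      by rewrite eq_sym => ->.
    exists D'; split; last by rewrite (@edge_maxE _ _ _ _ _ _ _ HM) csD.
    split; last by rewrite -(@sum_cs _ _ _ c) csD.
    move=> i'; rewrite /D'; case: pickP => // k _.
    by case: ifP.
Qed.
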